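(* Let $\Lambda$ be a finite $k$-graph without sources, $F$ a well chosen sequence, $C$ an $F$-harmonic component, and $x_F^C$ the unique vector in $[0,\infty)^{\Lambda^0}$ of unit $1$-norm with $A_Fx_F^C=\rho(A_F^C)x_F^C$ and $(x_F^C)_v=0$ for $v\notin\overline C$. Then $A_ix_F^C=\rho(A_i^C)\,x_F^C$ for every $i=1,\dots,k$.
   Context: A $k$-graph $(\Lambda,d)$ is a countable small category with functor $d:\Lambda\to\mathbb N^k$ having the unique factorisation property (for $d(\lambda)=m+n$ there are unique $\mu,\nu$ with $d(\mu)=m,d(\nu)=n,\lambda=\mu\nu$). $\Lambda^0=d^{-1}(0)$ are the vertices, $\Lambda^n=d^{-1}(n)$, $r,s$ range and source, $v\Lambda^nw=\{\lambda\in\Lambda^n:r(\lambda)=v,s(\lambda)=w\}$, $v\Lambda w=\bigcup_n v\Lambda^n w$, and for $V,W\subseteq\Lambda^0$, $V\Lambda W=\bigcup_{v\in V,w\in W}v\Lambda w$. Finite: each $\Lambda^n$ finite; without sources: $v\Lambda^n\neq\emptyset$ for all $v,n$. Vertex matrices $A_i(v,w)=|v\Lambda^{e_i}w|$, $A^n=\prod_iA_i^{n_i}$. Define $v\le w$ iff $v\Lambda w\ne\emptyset$ and $v\sim w$ iff $v\le w$ and $w\le v$; the equivalence classes are components. A component $C$ is trivial if $C\Lambda C=\{v\}$ for a single vertex $v$, non-trivial otherwise. The closure of $V\subseteq\Lambda^0$ is $\overline V=\{w\in\Lambda^0:w\Lambda V\ne\emptyset\}$. For a $\Lambda^0\times\Lambda^0$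 matrix $B$ and $R,S\subseteq\Lambda^0$, $B^{R,S}$ is the submatrix with rows $R$ and columns $S$, $B^S=B^{S,S}$, and $\rho$ denotes spectral radius. For a finite sequence $F=(a_1,\dots,a_m)$ in $\mathbb N^k\setminus\{0\}$ (repetitions allowed), $A_F=\sum_{j=1}^mA^{a_j}$, and $A_F^{R,S}$ means $(A_F)^{R,S}$; $F$ is well chosen if for all $v,w$: $A_F(v,w)>0$ iff $v\Lambda^lw\neq\emptyset$ for some $l\in\mathbb N^k\setminus\{0\}$. A non-trivial component $C$ is $F$-harmonic if either $\overline C\setminus C=\emptyset$ or $\rho(A_F^C)>\rho(A_F^{\overline C\setminus C})$. *)

(* Defs.v *)
From HB Require Import structures.
From mathcomp Require Import all_boot all_order all_algebra all_field.
From Stdlib Require Import ClassicalEpsilon.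
Set Implicit Arguments. Unset Strict Implicit. Unset Printing Implicit Defensive.
Import Order.TTheory GRing.Theory Num.Theory.
Local Open Scope ring_scope.

Definition asbool (P : Prop) : bool :=
  if excluded_middle_informative P then true else false.

Definition deg k := {ffun 'I_k -> nat}.
Definition deg0 k : deg k := [ffun => 0%N].
Definition degD k (m n : deg k) : deg k := [ffun j => (m j + n j)%N].
Definition deg_e k (i : 'I_k) : deg k := [ffun j => nat_of_bool (j == i)].

(* Data of a k-graph whose set of vertices (objects) is 'I_n.
   [mor] : the morphisms (a countable type), [rg]/[sr] : range/source,
   [dg] : the degree functor, [vid v] : identity morphism at v,
   [cmp mu nu] : composite mu nu (meaningful when sr mu = rg nu),
   [paths m] : an enumeration of Lambda^m (used for finiteness). *)
Record kgraph_data (k n : nat) := KGraphData {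
  mor : countType;
  rg : mor -> 'I_n;
  sr : mor -> 'I_n;
  dg : mor -> deg k;
  vid : 'I_n -> mor;
  cmp : mor -> mor -> mor;
  paths : deg k -> seq mor
}.
Arguments mor {k n} _.
Arguments rg {k n} _ _.
Arguments sr {k n} _ _.
Arguments dg {k n} _ _.
Arguments vid {k n} _ _.
Arguments cmp {k n} _ _ _.
Arguments paths {k n} _ _.

Section KGraph.
Variables (k n : nat) (G : kgraph_data k n).
Local Notation M := (mor G).

Definition is_kgraph : Prop :=
  [/\ (forall v, [/\ rg G (vid G v) = v, sr G (vid G v) = v & dg G (vid G v) = deg0 k]),
      (forall mu nu : M, sr G mu = rg G nu ->
         [/\ rg G (cmp G mu nu) = rg G mu, sr G (cmp G mu nu) = sr G nu &
             dg G (cmp G mu nu) = degD (dg G mu) (dg G nu)]),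
      (forall l : M, cmp G (vid G (rg G l)) l = l /\ cmp G l (vid G (sr G l)) = l),
      (forall l mu nu : M, sr G l = rg G mu -> sr G mu = rg G nu ->
         cmp G (cmp G l mu) nu = cmp G l (cmp G mu nu)) &
      (forall (l : M) (m p : deg k), dg G l = degD m p ->
         exists mu : M, exists nu : M,
           [/\ dg G mu = m, dg G nu = p, sr G mu = rg G nu, l = cmp G mu nu &
               forall mu' nu' : M, dg G mu' = m -> dg G nu' = p ->
                 sr G mu' = rg G nu' -> l = cmp G mu' nu' -> mu' = mu /\ nu' = nu])].

Definition kgraph_finite : Prop :=
  forall m : deg k, uniq (paths G m) /\ forall l : M, (l \in paths G m) = (dg G l == m).

Definition no_sources : Prop :=
  forall (v : 'I_n) (m : deg k), exists l : M, rg G l = v /\ dg G l = m.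

Definition vmx (i : 'I_k) : 'M[algC]_n :=
  \matrix_(v, w) (count (fun l => (rg G l == v) && (sr G l == w)) (paths G (deg_e i)))%:R.

Definition vmx_pow (m : deg k) : 'M[algC]_n := \prod_(i < k) vmx i ^+ m i.

Definition vmx_seq (F : seq (deg k)) : 'M[algC]_n := \sum_(a <- F) vmx_pow a.

Definition well_chosen (F : seq (deg k)) : Prop :=
  (forall a, a \in F -> a != deg0 k) /\
  forall v w : 'I_n, (0 < vmx_seq F v w) <->
    exists l : M, [/\ rg G l = v, sr G l = w & dg G l != deg0 k].

Definition vle (v w : 'I_n) : Prop := exists l : M, rg G l = v /\ sr G l = w.
Definition vequiv (v w : 'I_n) : Prop := vle v w /\ vle w v.

Definition is_component (C : {set 'I_n}) : Prop :=
  exists v, C = [set w | asbool (vequiv v w)].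

Definition trivial_component (C : {set 'I_n}) : Prop :=
  exists v : 'I_n, forall l : M, (rg G l \in C /\ sr G l \in C) <-> l = vid G v.

Definition vclosure (V : {set 'I_n}) : {set 'I_n} :=
  [set w | asbool (exists l : M, rg G l = w /\ sr G l \in V)].

End KGraph.

Definition submx_set n (B : 'M[algC]_n) (R S : {set 'I_n}) : 'M[algC]_(#|R|, #|S|) :=
  \matrix_(i, j) B (enum_val i) (enum_val j).
Definition submx_sq n (B : 'M[algC]_n) (S : {set 'I_n}) : 'M[algC]_#|S| :=
  submx_set B S S.

(* spectral radius: max |z| over the eigenvalues z (roots of char. poly);
   0 for the empty matrix *)
Definition specrad m (B : 'M[algC]_m) : algC :=
  \big[Num.max/0]_(z <- sval (closed_field_poly_normal (char_poly B))) `|z|.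

Definition F_harmonic k n (G : kgraph_data k n) (F : seq (deg k)) (C : {set 'I_n}) : Prop :=
  is_component G C /\ ~ trivial_component G C /\
  (vclosure G C :\: C = set0 \/
   specrad (submx_sq (vmx_seq G F) (vclosure G C :\: C)) < specrad (submx_sq (vmx_seq G F) C)).

(* Main.v *)
Require Import Defs.
From HB Require Import structures.
From mathcomp Require Import all_boot all_order all_algebra all_field.
From Stdlib Require Import ClassicalEpsilon Classical.
Import Order.TTheory GRing.Theory Num.Theory.
Local Open Scope ring_scope.

Section Graph.
Variables (k n : nat) (G : kgraph_data k n).
Hypothesis HG : is_kgraph G.
Hypothesis Hfin : kgraph_finite G.

Lemma count_comp (m p : deg k) (v w : 'I_n) :
  count (fun l => (rg G l == v) && (sr G l == w)) (paths G (degD m p)) =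
  (\sum_(u < n) count (fun l => (rg G l == v) && (sr G l == u)) (paths G m) *
                count (fun l => (rg G l == u) && (sr G l == w)) (paths G p))%N.
Proof.
case: HG => Hid Hcmp Hunit Hass Hfac.
pose Vd := fun q : mor G * mor G =>
  [&& rg G q.1 == v, rg G q.2 == sr G q.1 & sr G q.2 == w].
pose L := [seq (a, b) | a <- paths G m, b <- paths G p].
pose f := fun q : mor G * mor G => cmp G q.1 q.2.
have -> : count (fun l => (rg G l == v) && (sr G l == w)) (paths G (degD m p))
    = count Vd L.
  rewrite -!size_filter -(size_map f).
  apply/esym/perm_size/uniq_perm.
  - rewrite map_inj_in_uniq.
      rewrite filter_uniq // allpairs_uniq //.
      + by case: (Hfin m).
      + by case: (Hfin p).
      by move=> [a b] [c d] _ _ /=.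
    move=> [a b] [c d]; rewrite !mem_filter /Vd /f /= => /andP [/and3P [Ha Hb Hc] Hab]
      /andP [/and3P [Ha' Hb' Hc'] Hcd] E.
    case/allpairsP: Hab => [[a1 b1] [/= Ha1 Hb1 [E1 E2]]]; subst a1 b1.
    case/allpairsP: Hcd => [[c1 d1] [/= Hc1 Hd1 [E1 E2]]]; subst c1 d1.
    have da : dg G a = m by move: (proj2 (Hfin m) a); rewrite Ha1 => /esym/eqP.
    have dbb : dg G b = p by move: (proj2 (Hfin p) b); rewrite Hb1 => /esym/eqP.
    have dc : dg G c = m by move: (proj2 (Hfin m) c); rewrite Hc1 => /esym/eqP.
    have dd : dg G d = p by move: (proj2 (Hfin p) d); rewrite Hd1 => /esym/eqP.
    have sab : sr G a = rg G b by rewrite (eqP Hb).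
    have scd : sr G c = rg G d by rewrite (eqP Hb').
    have dl : dg G (cmp G a b) = degD m p by case: (Hcmp a b sab) => _ _ ->; rewrite da dbb.
    have [mu [nu [_ _ _ _ U]]] := Hfac (cmp G a b) m p dl.
    have [-> ->] := U a b da dbb sab erefl.
    by have [-> ->] := U c d dc dd scd E.
  - by rewrite filter_uniq //; case: (Hfin (degD m p)).
  move=> l; rewrite mem_filter; apply/mapP/idP.
    case=> [[a b]]; rewrite mem_filter /Vd /= => /andP [/and3P [Ha Hb Hc] Hab] El; subst l.
    case/allpairsP: Hab => [[a1 b1] [/= Ha1 Hb1 [E1 E2]]]; subst a1 b1.
    have da : dg G a = m by move: (proj2 (Hfin m) a); rewrite Ha1 => /esym/eqP.
    have dbb : dg G b = p by move: (proj2 (Hfin p) b); rewrite Hb1 => /esym/eqP.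
    have sab : sr G a = rg G b by rewrite (eqP Hb).
    case: (Hcmp a b sab) => -> -> dl.
    by rewrite /f /= Ha Hc (proj2 (Hfin (degD m p))) dl da dbb eqxx.
  move=> /andP [/= /andP [Hv Hw] Hl].
  have dl : dg G l = degD m p by apply/eqP; rewrite -(proj2 (Hfin (degD m p))).
  have [mu [nu [dmu dnu smn El _]]] := Hfac l m p dl.
  exists (mu, nu); last by [].
  rewrite mem_filter /Vd /=.
  case: (Hcmp mu nu smn); rewrite -El => Hr Hs _.
  rewrite -Hr Hv -smn eqxx -Hs Hw /=.
  apply/allpairsP; exists (mu, nu); split => //=.
    by rewrite (proj2 (Hfin m)) dmu.
  by rewrite (proj2 (Hfin p)) dnu.
rewrite /L; elim: (paths G m) => [|a s IH].
  by rewrite /= big1 // => u _; rewrite mul0n.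
rewrite /= count_cat IH count_map.
have -> : (\sum_(u < n) (((rg G a == v) && (sr G a == u)) +
     count (fun l => (rg G l == v) && (sr G l == u)) s) *
     count (fun l => (rg G l == u) && (sr G l == w)) (paths G p))%N
  = ((rg G a == v) * count (fun l => (rg G l == sr G a) && (sr G l == w)) (paths G p) +
     \sum_(u < n) count (fun l => (rg G l == v) && (sr G l == u)) s *
     count (fun l => (rg G l == u) && (sr G l == w)) (paths G p))%N.
  under eq_bigr => u _ do rewrite mulnDl.
  rewrite big_split /=; congr addn.
  rewrite (bigD1 (sr G a)) //= eqxx andbT big1 ?addn0 //.
  by move=> u /negbTE Hu; rewrite [sr G a == u]eq_sym Hu andbF.
congr addn; rewrite /Vd /=.
case E: (rg G a == v); rewrite ?mul1n ?mul0n.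
  by apply: eq_count => b; rewrite /= E.
by rewrite -(count_pred0 (paths G p)); apply: eq_count => b; rewrite /= E.
Qed.

Lemma degDC (m p : deg k) : degD m p = degD p m.
Proof. by apply/ffunP => j; rewrite !ffunE addnC. Qed.

Lemma vmx_mulE (i j : 'I_k) (v w : 'I_n) :
  (vmx G i *m vmx G j) v w =
  (count (fun l => (rg G l == v) && (sr G l == w)) (paths G (degD (deg_e i) (deg_e j))))%:R.
Proof.
rewrite mxE count_comp natr_sum; apply: eq_bigr => u _.
by rewrite !mxE natrM.
Qed.

Lemma vmx_comm (i j : 'I_k) : vmx G i *m vmx G j = vmx G j *m vmx G i.
Proof. by apply/matrixP => v w; rewrite !vmx_mulE degDC. Qed.

Lemma vmx_seq_comm (F : seq (deg k)) (i : 'I_k) :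
  vmx G i *m vmx_seq G F = vmx_seq G F *m vmx G i.
Proof.
rewrite mulmxE; apply: commr_sum => a _.
apply: commr_prod => j _; apply: commrX.
by rewrite /GRing.comm -!mulmxE vmx_comm.
Qed.

Lemma vmx_path (i : 'I_k) (v w : 'I_n) : vmx G i v w != 0 ->
  exists l, [/\ rg G l = v, sr G l = w & dg G l = deg_e i].
Proof.
rewrite mxE pnatr_eq0 -lt0n -has_count => /hasP [l Hl /andP [/eqP Hv /eqP Hw]].
exists l; split => //; apply/eqP; by rewrite -(proj2 (Hfin _)).
Qed.

Lemma deg0_vid (l : mor G) : dg G l = deg0 k -> l = vid G (rg G l).
Proof.
case: HG => Hid Hcmp Hunit Hass Hfac dl.
have dl' : dg G l = degD (deg0 k) (deg0 k) by rewrite dl; apply/ffunP => j; rewrite !ffunE.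
have [mu [nu [_ _ _ _ U]]] := Hfac l _ _ dl'.
have [r1 s1 d1] := Hid (rg G l).
have [s2 r2 d2] := Hid (sr G l).
have [E1 _] := U (vid G (rg G l)) l d1 dl (ltac:(by rewrite s1)) (esym (proj1 (Hunit l))).
have [E2 _] := U l (vid G (sr G l)) dl d2 (ltac:(by rewrite s2)) (esym (proj2 (Hunit l))).
by rewrite E1 E2.
Qed.

Lemma degD_eq0 (a b : deg k) : degD a b = deg0 k -> a = deg0 k /\ b = deg0 k.
Proof.
move=> E; have H j : (a j + b j = 0)%N by move/ffunP: E => /(_ j); rewrite !ffunE.
split; apply/ffunP => j; rewrite ffunE; move/eqP: (H j);
  by rewrite addn_eq0 => /andP [/eqP ? /eqP ?].
Qed.

Lemma vle_refl v : vle G v v.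
Proof. by case: HG => Hid _ _ _ _; exists (vid G v); case: (Hid v). Qed.

Lemma vle_trans u v w : vle G u v -> vle G v w -> vle G u w.
Proof.
case: HG => _ Hcmp _ _ _ [l1 [r1 s1]] [l2 [r2 s2]].
exists (cmp G l1 l2); have := Hcmp l1 l2; rewrite s1 r2 => /(_ erefl) [-> -> _].
by split.
Qed.

Definition npath (u v : 'I_n) := exists l, [/\ rg G l = u, sr G l = v & dg G l != deg0 k].

Lemma npath_trans_l u v w : npath u v -> vle G v w -> npath u w.
Proof.
case: HG => _ Hcmp _ _ _ [l1 [r1 s1 d1]] [l2 [r2 s2]].
exists (cmp G l1 l2); have := Hcmp l1 l2; rewrite s1 r2 => /(_ erefl) [-> -> ->].
split => //; apply/eqP => /degD_eq0 [] /eqP; by rewrite (negbTE d1).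
Qed.

Lemma npath_trans_r u v w : vle G u v -> npath v w -> npath u w.
Proof.
case: HG => _ Hcmp _ _ _ [l1 [r1 s1]] [l2 [r2 s2 d2]].
exists (cmp G l1 l2); have := Hcmp l1 l2; rewrite s1 r2 => /(_ erefl) [-> -> ->].
split => //; apply/eqP => /degD_eq0 [] _ /eqP; by rewrite (negbTE d2).
Qed.

Lemma vle_neq_npath u v : vle G u v -> u != v -> npath u v.
Proof.
case=> l [r s] Huv; exists l; split => //; apply/eqP => /deg0_vid E.
case: HG => Hid _ _ _ _; have [_ s' _] := Hid (rg G l).
have Hsr : sr G l = rg G l by rewrite {1}E s'.
by move: Huv; rewrite -r -s Hsr eqxx.
Qed.

Lemma asboolP (P : Prop) : reflect P (asbool P).
Proof. by rewrite /asbool; case: excluded_middle_informative => H; constructor. Qed.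

Lemma comp_mem {C : {set 'I_n}} : is_component G C ->
  exists c, forall w, (w \in C) <-> vequiv G c w.
Proof.
case=> c ->; exists c => w; rewrite inE; split; by move/asboolP.
Qed.

Lemma comp_vle {C : {set 'I_n}} : is_component G C ->
  forall a b, a \in C -> b \in C -> vle G a b.
Proof.
move=> /comp_mem [c Hc] a b /Hc [_ Ha] /Hc [Hb _].
exact: vle_trans Ha Hb.
Qed.

Lemma comp_closed {C : {set 'I_n}} : is_component G C ->
  forall a b, a \in C -> vle G a b -> vle G b a -> b \in C.
Proof.
move=> HC' a b Ha Hab Hba; have [c Hc] := comp_mem HC'.
have [Hca Hac] := proj1 (Hc a) Ha.
apply/Hc; split; [exact: vle_trans Hca Hab | exact: vle_trans Hba Hac].
Qed.

Lemma closure_mem (C : {set 'I_n}) w :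
  (w \in vclosure G C) <-> exists l, rg G l = w /\ sr G l \in C.
Proof. by rewrite inE; split => /asboolP. Qed.

Lemma closure_vle (C : {set 'I_n}) w :
  (w \in vclosure G C) <-> exists2 c, c \in C & vle G w c.
Proof.
rewrite closure_mem; split.
  by case=> l [r s]; exists (sr G l) => //; exists l.
by case=> c Hc [l [r s]]; exists l; rewrite s.
Qed.

Lemma comp_nontriv_npath {C : {set 'I_n}} : is_component G C ->
  ~ trivial_component G C -> forall a b, a \in C -> b \in C -> npath a b.
Proof.
move=> HC' HnT a b Ha Hb.
case: (eqVneq a b) => [<-|Hab]; last by apply: vle_neq_npath => //; apply: comp_vle HC' _ _ Ha Hb.
case: HG => Hid Hcmp _ _ _.
have : exists l, ~ ((rg G l \in C /\ sr G l \in C) <-> l = vid G a).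
  apply: Classical_Pred_Type.not_all_ex_not => H; apply: HnT; by exists a.
case=> l Hl.
have [Hr [Hs Hnl]] : rg G l \in C /\ sr G l \in C /\ l <> vid G a.
  have [r1 s1 _] := Hid a.
  case: (Classical_Prop.classic (rg G l \in C /\ sr G l \in C)) => Hin.
    case: Hin => H1 H2; split => //; split => // E; apply: Hl; split => // _.
  exfalso; apply: Hl; split => // E; exfalso; apply: Hin; by rewrite E r1 s1.
case: (eqVneq (dg G l) (deg0 k)) => Hd.
  have E := deg0_vid _ Hd.
  have Hra : rg G l != a by apply/eqP => Hra; apply: Hnl; rewrite E Hra.
  apply: (@npath_trans_l _ (rg G l)); last by apply: comp_vle HC' _ _ Hr Ha.
  by apply: vle_neq_npath; [apply: comp_vle HC' _ _ Ha Hr | rewrite eq_sym].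
apply: (@npath_trans_l _ (sr G l)); last by apply: comp_vle HC' _ _ Hs Ha.
apply: (@npath_trans_r _ (rg G l)); first by apply: comp_vle HC' _ _ Ha Hr.
by exists l.
Qed.

End Graph.
Section LA.
Variable m : nat.
Implicit Types (B : 'M[algC]_m) (u x : 'cV[algC]_m).

Lemma char_poly_trmx B : char_poly B^T = char_poly B.
Proof.
rewrite /char_poly -det_tr; congr (\det _); apply/matrixP => i j.
by rewrite !mxE eq_sym.
Qed.

Lemma eig_root B u z : B *m u = z *: u -> u != 0 -> root (char_poly B) z.
Proof.
move=> Hu Hn0; rewrite -char_poly_trmx -eigenvalue_root_char.
apply/eigenvalueP; exists u^T.
  by rewrite -trmx_mul Hu linearZ.
by rewrite trmx_eq0.
Qed.

Lemma root_eig B z : root (char_poly B) z -> exists2 u : 'cV_m, B *m u = z *: u & u != 0.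
Proof.
rewrite -char_poly_trmx -eigenvalue_root_char => /eigenvalueP [v Hv Hn0].
exists v^T; last by rewrite trmx_eq0.
by rewrite -[B]trmxK -trmx_mul Hv linearZ.
Qed.

Lemma root_in B z : root (char_poly B) z ->
  z \in sval (closed_field_poly_normal (char_poly B)).
Proof.
case: closed_field_poly_normal => r /= Hr.
by rewrite {1}Hr (monicP (char_poly_monic B)) scale1r root_prod_XsubC.
Qed.

Lemma maxs_prop (s : seq algC) :
  [/\ 0 <= \big[Num.max/0]_(z <- s) `|z|,
      (forall z, z \in s -> `|z| <= \big[Num.max/0]_(z <- s) `|z|) &
      (forall c, 0 <= c -> (forall z, z \in s -> `|z| <= c) ->
         \big[Num.max/0]_(z <- s) `|z| <= c)].
Proof.
elim: s => [|a s [H0 H1 H2]]; first by rewrite big_nil; split => // z.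
rewrite big_cons.
have Hc : `|a| >=< \big[Num.max/0]_(z <- s) `|z|.
  by apply: real_comparable; apply: ger0_real.
split.
- by rewrite comparable_le_max // H0 orbT.
- move=> z; rewrite inE => /orP [/eqP ->|Hz]; rewrite comparable_le_max // ?lexx //.
  by rewrite H1 ?orbT.
- move=> c Hc0 Hb; rewrite comparable_ge_max // Hb ?mem_head //= H2 // => z Hz.
  by rewrite Hb // inE Hz orbT.
Qed.

Lemma specrad_ge0 B : 0 <= specrad B.
Proof. by case: (maxs_prop (sval (closed_field_poly_normal (char_poly B)))). Qed.

Lemma specrad_ge B u z : B *m u = z *: u -> u != 0 -> `|z| <= specrad B.
Proof.
move=> Hu Hn; case: (maxs_prop (sval (closed_field_poly_normal (char_poly B)))) => _ H _.
by apply: H; apply: root_in; apply: eig_root Hu Hn.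
Qed.

Lemma specrad_le B c : 0 <= c ->
  (forall u z, B *m u = z *: u -> u != 0 -> `|z| <= c) -> specrad B <= c.
Proof.
move=> Hc H; rewrite /specrad.
case: closed_field_poly_normal => r /= Hr.
case: (maxs_prop r) => _ _ H2; apply: H2 => // z Hz.
have : root (char_poly B) z.
  by rewrite Hr (monicP (char_poly_monic B)) scale1r root_prod_XsubC.
by case/root_eig => u Hu Hn; apply: H Hu Hn.
Qed.

Lemma perron_bound B x u c z :
  (forall i j, 0 <= B i j) -> (forall i, 0 < x i 0) -> B *m x = c *: x ->
  B *m u = z *: u -> u != 0 -> `|z| <= c.
Proof.
move=> HB Hx HBx HBu Hu.
have [i0 Hi0] : exists i, u i 0 != 0.
  case: (pickP (fun i => u i 0 != 0)) => [i Hi|H]; first by exists i.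
  move/negP: Hu; case; apply/eqP/matrixP => i j; rewrite (ord1 j) mxE.
  by move/negbFE/eqP: (H i).
pose F i := `|u i 0| / x i 0.
have Freal i : F i \is Num.real.
  by apply: ger0_real; rewrite /F divr_ge0 // ltW.
have [j _ Hj] := @comparable_arg_maxP _ _ _ i0 predT F erefl
  (fun i j _ _ => real_comparable (Freal i) (Freal j)).
set t := F j.
have Ht i : `|u i 0| <= t * x i 0.
  by rewrite -ler_pdivrMr //; apply: Hj.
have Ft : 0 < t.
  apply: (lt_le_trans _ (Hj i0 erefl)); rewrite /F divr_gt0 //.
  by rewrite normr_gt0.
have Huj : `|u j 0| = t * x j 0.
  by rewrite /t /F divfK // gt_eqF.
have Hujp : 0 < `|u j 0| by rewrite Huj mulr_gt0.
have : `|z| * `|u j 0| <= c * `|u j 0|.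
  rewrite -normrM.
  have -> : z * u j 0 = (B *m u) j 0 by rewrite HBu mxE.
  rewrite mxE; apply: (le_trans (ler_norm_sum _ _ _)).
  apply: (@le_trans _ _ (\sum_i B j i * (t * x i 0))).
    apply: ler_sum => i _; rewrite normrM ger0_norm //.
    by apply: ler_wpM2l.
  have -> : \sum_i B j i * (t * x i 0) = t * (B *m x) j 0.
    by rewrite mxE mulr_sumr; apply: eq_bigr => i _; rewrite mulrCA.
  by rewrite HBx mxE Huj mulrCA.
by rewrite ler_pM2r.
Qed.

End LA.

Definition subv {n} (x : 'cV[algC]_n) (S : {set 'I_n}) : 'cV[algC]_#|S| :=
  \col_(j < #|S|) x (enum_val j) 0.

Lemma sub_eig n (B : 'M[algC]_n) (S : {set 'I_n}) (x : 'cV[algC]_n) (c : algC) :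
  (forall v w, v \in S -> w \notin S -> B v w * x w 0 = 0) -> B *m x = c *: x ->
  submx_sq B S *m subv x S = c *: subv x S.
Proof.
move=> H HBx; apply/matrixP => j z; rewrite (ord1 z) !mxE.
have -> : \sum_(j0 < #|S|) submx_sq B S j j0 * subv x S j0 0
    = \sum_(w in S) B (enum_val j) w * x w 0.
  by symmetry; rewrite (big_enum_val (A:=mem S)); apply: eq_bigr => i _; rewrite !mxE.
have -> : c * x (enum_val j) 0 = (B *m x) (enum_val j) 0 by rewrite HBx mxE.
rewrite mxE [RHS](bigID (mem S)) /= [X in _ = _ + X]big1 ?addr0 //.
by move=> w Hw; apply: H => //; apply: enum_valP.
Qed.

Definition nnmx {n} (B : 'M[algC]_n) := forall v w, 0 <= B v w.

Lemma nnmx_mul n (A B : 'M[algC]_n) : nnmx A -> nnmx B -> nnmx (A *m B).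
Proof.
by move=> HA HB v w; rewrite mxE; apply: sumr_ge0 => u _; apply: mulr_ge0.
Qed.

Lemma nnmx1 n : nnmx (1%:M : 'M[algC]_n).
Proof. by move=> v w; rewrite mxE ler0n. Qed.

Lemma nnmx_vmx k n (G : kgraph_data k n) i : nnmx (vmx G i).
Proof. by move=> v w; rewrite mxE ler0n. Qed.

Lemma nnmx_seq k n (G : kgraph_data k n) F : nnmx (vmx_seq G F).
Proof.
rewrite /vmx_seq; apply: (big_ind (@nnmx n)).
- by move=> v w; rewrite mxE.
- by move=> A B HA HB v w; rewrite mxE addr_ge0.
move=> a _; rewrite /vmx_pow; apply: (big_ind (@nnmx n)).
- exact: nnmx1.
- by move=> A B HA HB; rewrite -mulmxE; apply: nnmx_mul.
move=> j _; elim: (a j) => [|e IH]; first by rewrite expr0; apply: nnmx1.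
by rewrite exprS -mulmxE; apply: nnmx_mul => //; apply: nnmx_vmx.
Qed.
Arguments vmx_path {k n G} Hfin {i v w}.
Arguments npath {k n} G u v.
Arguments vle_trans {k n G} HG {u v w}.
Arguments closure_vle {k n G C w}.
Arguments comp_closed {k n G} HG {C} _ {a b}.
Arguments comp_vle {k n G} HG {C} _ {a b}.
Arguments comp_nontriv_npath {k n G} HG {C} _ _ {a b}.
Arguments specrad_ge {m B u z}.
Arguments specrad_le {m B} c.
Arguments perron_bound {m B x u c z}.
Arguments sub_eig {n B S x c}.

Theorem lemma7p7 (k n : nat) (G : kgraph_data k n)
  (HG : is_kgraph G) (Hfin : kgraph_finite G) (Hns : no_sources G)
  (F : seq (deg k)) (HF : well_chosen G F)
  (C : {set 'I_n}) (HC : F_harmonic G F C)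
  (x : 'cV[algC]_n)
  (Hx_unique : forall y : 'cV[algC]_n,
      ((forall v, 0 <= y v 0) /\
       \sum_v `|y v 0| = 1 /\
       vmx_seq G F *m y = specrad (submx_sq (vmx_seq G F) C) *: y /\
       (forall v, v \notin vclosure G C -> y v 0 = 0)) <-> y = x) :
  forall i : 'I_k, vmx G i *m x = specrad (submx_sq (vmx G i) C) *: x.
Proof.
move=> i.
have [Hxnn [Hxs1 [HAFx Hxsupp]]] := proj2 (Hx_unique x) erefl.
case: HC => HCc [HnT Hharm].
set AF := vmx_seq G F in HAFx Hx_unique Hharm *.
set rho := specrad (submx_sq AF C) in HAFx Hx_unique Hharm *.
have rho0 : 0 <= rho by apply: specrad_ge0.
have Hxcl w : x w 0 != 0 -> w \in vclosure G C.
  by move=> Hw; case: (boolP (w \in vclosure G C)) => // Hn; rewrite Hxsupp ?eqxx in Hw.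
pose y := vmx G i *m x.
have ynn v : 0 <= y v 0.
  by rewrite mxE; apply: sumr_ge0 => w _; apply: mulr_ge0 => //; apply: nnmx_vmx.
have ysupp v : v \notin vclosure G C -> y v 0 = 0.
  move=> Hv; rewrite mxE big1 // => w _.
  case: (eqVneq (vmx G i v w) 0) => [->|Hvw]; first by rewrite mul0r.
  case: (eqVneq (x w 0) 0) => [->|Hw]; first by rewrite mulr0.
  exfalso; move/negP: Hv; apply.
  have [l [rl sl _]] := vmx_path Hfin Hvw.
  have /closure_vle [c Hc Hwc] := Hxcl w Hw.
  apply/closure_vle; exists c => //; apply: (vle_trans HG _ Hwc).
  by exists l.
have yeig : AF *m y = rho *: y.
  by rewrite /y mulmxA -(vmx_seq_comm _ _ _ HG Hfin) -mulmxA HAFx scalemxAr.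
pose s := \sum_v `|y v 0|.
have s0 : 0 <= s by apply: sumr_ge0 => v _.
have Hy : vmx G i *m x = s *: x.
  case: (eqVneq s 0) => Hs.
    rewrite Hs scale0r; apply/matrixP => v j; rewrite (ord1 j) [RHS]mxE.
    apply/eqP; rewrite -normr_eq0; apply/eqP.
    exact: (@psumr_eq0P _ _ predT (fun w => `|y w 0|)).
  have Hz : s^-1 *: y = x.
    apply/Hx_unique; split; [|split; [|split]].
    - by move=> v; rewrite mxE mulr_ge0 // invr_ge0.
    - under eq_bigr => v _ do rewrite mxE normrM (ger0_norm (x:=s^-1)) ?invr_ge0 //.
      by rewrite -mulr_sumr mulVf.
    - by rewrite -scalemxAr yeig !scalerA mulrC.
    - by move=> v Hv; rewrite mxE ysupp ?mulr0.
  by rewrite -{2}Hz scalerA divff ?scale1r.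
have [v0 Hv0C Hv0] : exists2 v0, v0 \in C & x v0 0 != 0.
  case: (pickP (fun v => (v \in C) && (x v 0 != 0))) => [v /andP [H1 H2]|H];
    first by exists v.
  exfalso.
  have HC0 v : v \in C -> x v 0 = 0 by move=> Hv; move: (H v); rewrite Hv /= => /negbFE/eqP.
  have [w Hw] : exists w, x w 0 != 0.
    case: (pickP (fun w => x w 0 != 0)) => [w Hw|H']; first by exists w.
    move: Hxs1; rewrite big1 => [/eqP|w _]; first by rewrite eq_sym oner_eq0.
    by move/negbFE/eqP: (H' w) => ->; rewrite normr0.
  have HwD : w \in vclosure G C :\: C.
    rewrite inE Hxcl // andbT; apply/negP => HwC; by rewrite HC0 ?eqxx in Hw.
  set D := vclosure G C :\: C in HwD Hharm.
  case: Hharm => [HD|Hlt]; first by rewrite HD inE in HwD.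
  have Heig : submx_sq AF D *m subv x D = rho *: subv x D.
    apply: sub_eig => // v w' _ Hw'.
    case: (boolP (w' \in vclosure G C)) => Hcl.
      by rewrite HC0 ?mulr0 //; move: Hw'; rewrite inE Hcl andbT negbK.
    by rewrite Hxsupp ?mulr0.
  have Hne : subv x D != 0.
    apply/negP => /eqP /matrixP /(_ (enum_rank_in HwD w) 0).
    by rewrite !mxE enum_rankK_in //; apply/eqP.
  have := specrad_ge Heig Hne; rewrite ger0_norm // => Hle.
  by have := lt_le_trans Hlt Hle; rewrite ltxx.
have Hxpos u : u \in C -> 0 < x u 0.
  move=> Hu.
  have Hv0p : 0 < x v0 0 by rewrite lt_def Hv0 Hxnn.
  have /(proj2 HF u v0) Hp : npath G u v0 by apply: (comp_nontriv_npath HG HCc HnT).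
  have Hgt : 0 < rho * x u 0.
    have -> : rho * x u 0 = (AF *m x) u 0 by rewrite HAFx mxE.
    rewrite mxE (bigD1 v0) //=.
    apply: (lt_le_trans (_ : 0 < AF u v0 * x v0 0)); first by apply: mulr_gt0.
    rewrite lerDl; apply: sumr_ge0 => w _; apply: mulr_ge0 => //.
    exact: nnmx_seq.
  rewrite lt_def Hxnn andbT; apply/eqP => H0; by rewrite H0 mulr0 ltxx in Hgt.
have HeigC : submx_sq (vmx G i) C *m subv x C = s *: subv x C.
  apply: sub_eig => // v w Hv Hw.
  case: (eqVneq (vmx G i v w) 0) => [->|Hvw]; first by rewrite mul0r.
  case: (eqVneq (x w 0) 0) => [->|Hx0]; first by rewrite mulr0.
  exfalso; move/negP: Hw; apply.
  have [l [rl sl _]] := vmx_path Hfin Hvw.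
  have /closure_vle [c Hc Hwc] := Hxcl w Hx0.
  apply: (comp_closed HG HCc Hv); first by exists l.
  by apply: (vle_trans HG Hwc); apply: (comp_vle HG HCc).
have HxCne : subv x C != 0.
  apply/negP => /eqP /matrixP /(_ (enum_rank_in Hv0C v0) 0).
  by rewrite !mxE enum_rankK_in //; apply/eqP.
rewrite Hy; congr (_ *: _); apply/le_anti/andP; split.
  by rewrite -{1}(ger0_norm s0); apply: specrad_ge HeigC HxCne.
apply: specrad_le => // u z Hu Hn.
apply: (perron_bound _ _ HeigC Hu Hn).
- by move=> a b; rewrite mxE; apply: nnmx_vmx.
- by move=> j; rewrite mxE; apply: Hxpos; apply: enum_valP.
Qed.
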